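(* Let $q$ be an odd prime power, $n=2^v$ with $v\ge1$, $s$ an odd integer and $t$ an integer with $qt\equiv t\pmod{2^v}$. If Type-I duadic splittings of $\mathbb{Z}_{2^v}$ given by $\rho_{s,t}$ exist, then Type-I duadic splittings of $\mathbb{Z}_{2^v}$ given by $\tau_t=\rho_{1,t}$ exist.
   Context: $\mu_q:\mathbb{Z}_n\to\mathbb{Z}_n$, $i\mapsto qi\bmod n$; $P$ is $\mu_q$-invariant if $\mu_q(P)=P$. $\rho_{s,t}:\mathbb{Z}_n\to\mathbb{Z}_n$, $i\mapsto s(i+t)\bmod n$; $\tau_t(i)=i+t\bmod n$. Type-I duadic splittings of $\mathbb{Z}_n$ given by $\rho_{s,t}$ exist if there is a $\mu_q$-invariant $P$ with $\mathbb{Z}_n=P\cup\rho_{s,t}(P)$ a disjoint union. *)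

(* Defs.v *)
From HB Require Import structures.
From mathcomp Require Import all_boot all_order all_algebra.
Set Implicit Arguments. Unset Strict Implicit. Unset Printing Implicit Defensive.
Import GRing.Theory.
Local Open Scope ring_scope.

(* Z_n is represented by 'Z_n (valid here since n = 2^v >= 2). *)

Definition mu (n q : nat) (i : 'Z_n) : 'Z_n := q%:R * i.

Definition rho (n : nat) (s t : int) (i : 'Z_n) : 'Z_n := s%:~R * (i + t%:~R).

Definition tau (n : nat) (t : int) (i : 'Z_n) : 'Z_n := i + t%:~R.

Definition typeI_duadic_exists (n q : nat) (f : 'Z_n -> 'Z_n) : Prop :=
  exists P : {set 'Z_n},
    [/\ mu q @: P = P, [disjoint P & f @: P] & P :|: f @: P = setT].

Definition prime_power (q : nat) : Prop :=
  exists p k : nat, [/\ prime p, (0 < k)%N & q = (p ^ k)%N].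

Arguments mu n q i : clear implicits.
Arguments rho n s t i : clear implicits.
Arguments tau n t i : clear implicits.
Arguments typeI_duadic_exists n q f : clear implicits.

(* Main.v *)
Require Import Defs.
From mathcomp Require Import all_boot all_order all_algebra.
From mathcomp Require Import ring zify.
Set Implicit Arguments. Unset Strict Implicit. Unset Printing Implicit Defensive.
Import GRing.Theory Num.Theory.
Local Open Scope ring_scope.

Lemma NZp (N : nat) : (1 < N)%N -> ((N%:Z)%:~R : 'Z_N) = 0.
Proof. by move=> N1; rewrite -pmulrn pchar_Zp. Qed.

Lemma intZp (N : nat) (t : int) : (1 < N)%N ->
  (t%:~R : 'Z_N) = (`|(t %% N%:Z)%Z|%N)%:R.
Proof.
move=> N1.
rewrite {1}(divz_eq t N%:Z) rmorphD rmorphM /= NZp // mulr0 add0r.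
have N0 : N%:Z != 0 by rewrite eqz_nat; case: N N1.
have h : (t %% N%:Z)%Z = (`|(t %% N%:Z)%Z|%N)%:Z by rewrite gez0_abs ?modz_ge0.
by rewrite [in LHS]h pmulrn.
Qed.

Lemma solveZp (N : nat) (a : int) (k : nat) : (1 < N)%N ->
  (gcdn `|a| N %| k)%N -> exists y : 'Z_N, a%:~R * y = k%:R.
Proof.
move=> N1 /dvdnP [m ->].
have [u [v Huv]] := Bezoutz a N%:Z.
exists ((u * m%:Z)%:~R).
have : ((u * a + v * N%:Z) * m%:Z)%:~R = ((gcdz a N%:Z) * m%:Z)%:~R :> 'Z_N by rewrite Huv.
rewrite /gcdz !rmorphM !rmorphD !rmorphM /= NZp // mulr0 addr0.
move=> H.
by rewrite mulrA [a%:~R * _]mulrC H -!pmulrn mulrC.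
Qed.
Lemma valZp (N : nat) (x : 'Z_N) : (1 < N)%N -> x = (x : nat)%:R.
Proof. by move=> _; rewrite natr_Zp. Qed.

Lemma buildQ (N q g tn : nat) (t : int) : (1 < N)%N -> (2 * g %| N)%N -> (0 < g)%N ->
  (2 * g %| q.-1)%N -> (0 < q)%N -> (tn %% (2 * g) = g)%N -> (t%:~R : 'Z_N) = tn%:R ->
  coprime N q -> typeI_duadic_exists N q (rho N 1 t).
Proof.
move=> N1 gN g0 gq q0 tg tE cq.
pose Q := [set i : 'Z_N | ((i : nat) %% (2 * g) < g)%N].
have hval : forall x : 'Z_N, ((x : nat) %% (2 * g) = (x : nat) %% (2 * g))%N by [].
have hmu : forall i, (mu N q i \in Q) = (i \in Q).
  move=> i; rewrite !inE /mu [i in q%:R * i]valZp // -natrM val_Zp_nat // modn_dvdm //.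
  have -> : (q * i = q.-1 * i + i)%N by case: q q0 {gq cq} => // q' _; rewrite mulSn addnC.
  case/dvdnP: gq => k ->.
  have -> : (k * (2 * g) * i = (k * i) * (2 * g))%N by rewrite mulnAC.
  by rewrite modnMDl.
have htau : forall i, (rho N 1 t i \in Q) = ~~ (i \in Q).
  move=> i; rewrite !inE /rho mul1r tE [i in i + _]valZp // -natrD val_Zp_nat // modn_dvdm //.
  rewrite -modnDmr tg -modnDml.
  have g2 : (0 < 2 * g)%N by rewrite muln_gt0.
  move: (ltn_pmod (i : nat) g2); move: ((i : nat) %% (2 * g))%N => r r2.
  clear -r2 g0.
  case: (ltnP r g) => rg.
    by rewrite modn_small ?ltnNge ?leq_addl //; lia.
  have -> : (r + g = 2 * g + (r - g))%N by lia.
  rewrite modnDl modn_small; lia.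
have qu : (q%:R : 'Z_N) \is a GRing.unit by rewrite unitZpE.
exists Q; split.
- apply/setP => x; apply/imsetP/idP.
    by case=> y yQ ->; rewrite hmu.
  move=> xQ; exists ((q%:R)^-1 * x); last by rewrite /mu (mulVKr qu).
  by rewrite -hmu /mu (mulVKr qu).
- rewrite disjoint_subset; apply/subsetP => x xQ; rewrite inE /=.
  apply/imsetP => -[y yQ Ex].
  by move: xQ; rewrite Ex htau yQ.
- apply/setP => x; rewrite in_setU in_setT; case xQ: (x \in Q) => //=.
  apply/imsetP; exists (x - t%:~R); last by rewrite /rho mul1r subrK.
  have := htau (x - t%:~R); rewrite {1}/rho mul1r subrK xQ.
  by case: (_ \in Q).
Qed.
Local Open Scope nat_scope.
Lemma pow2_step (v d tn : nat) : (d %| 2 ^ v) -> ~~ (d %| tn) ->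
  (2 * gcdn tn (2 ^ v) %| d).
Proof.
move=> /(dvdn_pfactor _ _ (isT : prime 2)) [a _ ->].
have /(dvdn_pfactor _ _ (isT : prime 2)) [b _ gE] := dvdn_gcdr tn (2 ^ v).
move=> nd; rewrite gE -expnS dvdn_Pexp2l //.
rewrite ltnNge; apply/negP => ab; move/negP: nd; apply.
apply: (dvdn_trans _ (dvdn_gcdl tn (2 ^ v))); rewrite gE dvdn_Pexp2l //.
Qed.

Lemma tmod (v tn : nat) : (0 < v) -> (2 * gcdn tn (2 ^ v) %| 2 ^ v) ->
  tn %% (2 * gcdn tn (2 ^ v)) = gcdn tn (2 ^ v).
Proof.
move=> v0; set g := gcdn tn (2 ^ v) => gN.
have g0 : 0 < g by rewrite gcdn_gt0 expn_gt0 orbT.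
have /dvdnP [w tE] := dvdn_gcdl tn (2 ^ v); rewrite -/g in tE.
case ow : (odd w).
  rewrite tE -[w]odd_double_half ow.
  have -> : (1 + (w./2).*2) * g = w./2 * (2 * g) + g by rewrite -muln2; ring.
  by rewrite modnMDl modn_small //; lia.
have : 2 * g %| g.
  rewrite dvdn_gcd gN andbT tE -[w]odd_double_half ow add0n -muln2.
  by rewrite -mulnA [2 * g]mulnC dvdn_mull.
move/(dvdn_leq g0); lia.
Qed.
Local Open Scope ring_scope.

Theorem lemma3p7 (q v : nat) (s t : int) :
  prime_power q -> odd q -> (1 <= v)%N -> odd `|s|%N ->
  (q%:Z * t = t %[mod (2 ^ v)%N%:Z])%Z ->
  typeI_duadic_exists (2 ^ v) q (rho (2 ^ v) s t) ->
  typeI_duadic_exists (2 ^ v) q (rho (2 ^ v) 1 t).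
Proof.
move=> _ oq hv os _ [P [PmP Pdis PU]].
set N := (2 ^ v)%N.
have N1 : (1 < N)%N by rewrite /N -{1}(expn0 2) ltn_exp2l.
have cN : forall n, odd n -> coprime N n.
  by move=> n on; rewrite /N coprime_pexpl // coprime2n.
have qu : (q%:R : 'Z_N) \is a GRing.unit by rewrite unitZpE // cN.
have su : (s%:~R : 'Z_N) \is a GRing.unit.
  rewrite [s]intEsign rmorphM /= unitrM; apply/andP; split.
    by rewrite rmorphXn /= rmorphN1 unitrX // unitrN1.
  by rewrite -pmulrn unitZpE // cN.
pose rh := rho N s t.
have rinj : injective rh.
  by move=> x y; rewrite /rh /rho => /(mulrI su) /addIr.
have minj : injective (mu N q) by move=> x y /(mulrI qu).
have Pdis' : [disjoint P & rh @: P] := Pdis.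
have PU' : P :|: rh @: P = setT := PU.
have PmP' : mu N q @: P = P := PmP.
have nfix : forall x, rh x != x.
  move=> x; apply/eqP => Ex.
  case xP : (x \in P).
    by have := disjointFr Pdis' xP; rewrite -{1}Ex (mem_imset _ _ rinj) xP.
  have : x \in P :|: rh @: P by rewrite PU' inE.
  by rewrite in_setU xP /= -{1}Ex (mem_imset _ _ rinj) xP.
have nmu : forall x, rh x != mu N q x.
  move=> x; apply/eqP => Ex.
  case xP : (x \in P).
    have m : mu N q x \in P by rewrite -PmP' (mem_imset _ _ minj).
    by have := disjointFr Pdis' m; rewrite -Ex (mem_imset _ _ rinj) xP.
  have : rh x \in P :|: rh @: P by rewrite PU' inE.
  by rewrite in_setU (mem_imset _ _ rinj) xP orbF Ex -PmP' (mem_imset _ _ minj) xP.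
set tn := `|(t %% N%:Z)%Z|%N.
have tE : (t%:~R : 'Z_N) = tn%:R by rewrite intZp.
have h1 : ~~ (gcdn `|1 - s| N %| tn)%N.
  apply/negP => /(solveZp N1) [y Hy]; move/eqP: (nfix (s%:~R * y)); apply.
  by rewrite /rh /rho tE -Hy rmorphB /= rmorph1; ring.
have h2 : ~~ (gcdn `|q%:Z - s| N %| tn)%N.
  apply/negP => /(solveZp N1) [y Hy]; move/eqP: (nmu (s%:~R * y)); apply.
  by rewrite /rh /rho /mu tE -Hy rmorphB /= -pmulrn; ring.
have d1 := pow2_step (dvdn_gcdr _ _) h1.
have d2 := pow2_step (dvdn_gcdr _ _) h2.
set g := gcdn tn N in d1 d2.
have gN : (2 * g %| N)%N by apply: dvdn_trans d1 (dvdn_gcdr _ _).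
have g1 : (2 * g %| `|1 - s|)%N by apply: dvdn_trans d1 (dvdn_gcdl _ _).
have g2 : (2 * g %| `|q%:Z - s|)%N by apply: dvdn_trans d2 (dvdn_gcdl _ _).
have q0 : (0 < q)%N by rewrite lt0n; apply/negP => /eqP q0; rewrite q0 in oq.
have gq : (2 * g %| q.-1)%N.
  have : ((2 * g)%:Z %| (q%:Z - s) - (1 - s))%Z by apply: rpredB; [exact: g2 | exact: g1].
  have -> : (q%:Z - s - (1 - s) = (q.-1)%:Z)%R by rewrite {1}(esym (prednK q0)) -addn1 PoszD; ring.
  by [].
apply: (buildQ (g := g) (tn := tn)) => //.
- by rewrite /g gcdn_gt0 /N expn_gt0 orbT.
- by move: gN; rewrite /g /N => gN; apply: tmod.
- exact: cN.
Qed.
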